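(* Let $\theta$, $\epsilon>0$ and $\Lambda$ be as in the context. Let $a,b,d\in\mathbb{Z}$ with $d\neq0$, $(a,b)\neq(0,0)$ and $\gcd(a,b,d)=1$, let $\lambda=a\cos\theta-b\sin\theta$, so that $\lambda^*=a\sin\theta+b\cos\theta$, and let $w=(1,\lambda/d)$. Define $S\subset\mathbb{R}$ by $\{0\}\times S=(\Lambda+w\mathbb{R})\cap(\{0\}\times\mathbb{R})$, where $\Lambda+w\mathbb{R}=\{p+tw:\ p\in\Lambda,\ t\in\mathbb{R}\}$. If $\epsilon\ge 1/|\lambda^*|$, then $S$ is a dense subset of $\mathbb{R}$. If $0<\epsilon<1/|\lambda^*|$, then the closure of $S$ is $$\mathrm{cl}(S)=\left\{\frac{l+t\lambda^*}{d}:\ 0\le t\le\epsilon,\ l\in\mathbb{Z}\right\}.$$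
   Context: Fix $\theta$ with $\tan\theta$ irrational and $\epsilon>0$. Define $\Lambda_F=\{m\cos\theta-n\sin\theta:\ m,n\in\mathbb{Z},\ 0\le m\sin\theta+n\cos\theta<\epsilon\}$ and $\Lambda=\Lambda_F\times\mathbb{Z}\subset\mathbb{R}^2$. For $x=m\cos\theta-n\sin\theta$ with $m,n\in\mathbb{Z}$ (the integers $m,n$ are uniquely determined by $x$ since $\tan\theta$ is irrational), write $x^*=m\sin\theta+n\cos\theta$. *)

(* Defs.v *)
From Stdlib Require Import Reals ZArith.
Open Scope R_scope.

(* tan theta is irrational (this also excludes cos theta = 0, where Stdlib's
   total tan evaluates to 0). *)
Definition tan_irrational (theta : R) : Prop :=
  forall p q : Z, q <> 0%Z -> tan theta <> IZR p / IZR q.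

Definition LamF (theta eps x : R) : Prop :=
  exists m n : Z, x = IZR m * cos theta - IZR n * sin theta /\
    0 <= IZR m * sin theta + IZR n * cos theta < eps.

Definition Lam (theta eps : R) (p : R * R) : Prop :=
  LamF theta eps (fst p) /\ exists k : Z, snd p = IZR k.

Definition lam (theta : R) (a b : Z) : R := IZR a * cos theta - IZR b * sin theta.
Definition lamstar (theta : R) (a b : Z) : R := IZR a * sin theta + IZR b * cos theta.

Definition w (theta : R) (a b d : Z) : R * R := (1, lam theta a b / IZR d).

Definition Sset (theta eps : R) (a b d : Z) (y : R) : Prop :=
  exists (p : R * R) (t : R), Lam theta eps p /\
    fst p + t * fst (w theta a b d) = 0 /\
    snd p + t * snd (w theta a b d) = y.

Definition dense_in_R (A : R -> Prop) : Prop :=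
  forall x e, 0 < e -> exists y, A y /\ Rabs (y - x) < e.

Definition closure (A : R -> Prop) (y : R) : Prop :=
  forall e, 0 < e -> exists z, A z /\ Rabs (z - y) < e.

(* Main.v *)
Require Import Defs.
From Stdlib Require Import Reals ZArith Lra Lia Psatz.
Open Scope R_scope.

Definition inG (al be z : R) := exists m n : Z, z = IZR m * al + IZR n * be.
Definition indep (x y : R) := forall p q : Z, IZR p * x + IZR q * y = 0 -> p = 0%Z /\ q = 0%Z.

Lemma inG_comb al be x y (k j : Z) : inG al be x -> inG al be y -> inG al be (IZR k * x + IZR j * y).
Proof.
  intros [m1 [n1 H1]] [m2 [n2 H2]]. exists (k*m1 + j*m2)%Z, (k*n1+j*n2)%Z.
  subst. rewrite !plus_IZR, !mult_IZR. ring.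
Qed.

Lemma modstep al be x y : inG al be x -> inG al be y -> indep x y -> 0 < y ->
  exists r, inG al be r /\ indep y r /\ 0 < r < y /\ (y < x -> 2 * r < x).
Proof.
  intros Gx Gy Hi Hy.
  destruct (archimed (x / y)) as [A1 A2].
  set (k := (up (x/y) - 1)%Z).
  assert (Ek : IZR k = IZR (up (x/y)) - 1) by (unfold k; rewrite minus_IZR; reflexivity).
  set (q := x / y) in *.
  assert (Hx : x = q * y) by (unfold q; field; lra).
  exists (IZR 1 * x + IZR (- k) * y).
  split; [apply inG_comb; auto|].
  rewrite opp_IZR.
  assert (Hr0 : 0 <= x - IZR k * y < y) by (rewrite Hx, Ek; nra).
  split.
  { intros p r Hpr.
    assert (H : IZR r * x + IZR (p - r * k) * y = 0)
      by (rewrite minus_IZR, mult_IZR; rewrite <- Hpr; ring).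
    destruct (Hi _ _ H) as [H1 H2]. subst r. split; lia. }
  split.
  { split; [|lra].
    destruct (Rle_lt_or_eq_dec 0 (x - IZR k * y)) as [h|h]; [lra| lra |].
    exfalso.
    assert (H : IZR 1 * x + IZR (- k) * y = 0) by (rewrite opp_IZR; lra).
    destruct (Hi _ _ H); lia. }
  intros Hyx.
  assert (q > 1).
  { destruct (Rle_or_lt q 1); auto. nra. }
  assert (IZR k >= 1).
  { assert (2 <= up q)%Z. { apply le_IZR. assert (1 < IZR (up q)) by lra.
      assert (1 < up q)%Z by (apply lt_IZR; lra). apply IZR_le. lia. }
    apply Rle_ge. rewrite Ek. apply IZR_le in H0. lra. }
  nra.
Qed.

Lemma step2 al be x y : inG al be x -> inG al be y -> indep x y -> 0 < y < x ->
  exists x' y', inG al be x' /\ inG al be y' /\ indep x' y' /\ 0 < y' < x' /\ 2 * x' < x.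
Proof.
  intros Gx Gy Hi Hy.
  destruct (modstep al be x y Gx Gy Hi ltac:(lra)) as [r1 [G1 [I1 [R1 R1']]]].
  destruct (modstep al be y r1 Gy G1 I1 ltac:(lra)) as [r2 [G2 [I2 [R2 _]]]].
  exists r1, r2. split; [|split; [|split; [|split]]]; auto; try lra.
Qed.

Lemma iterN al be : forall N x y, inG al be x -> inG al be y -> indep x y -> 0 < y < x ->
  exists z, inG al be z /\ 0 < z /\ z * 2 ^ N <= x.
Proof.
  induction N; intros x y Gx Gy Hi Hy.
  - exists y. simpl. repeat split; auto; lra.
  - destruct (step2 al be x y Gx Gy Hi Hy) as [x' [y' [G1 [G2 [I [H1 H2]]]]]].
    destruct (IHN x' y' G1 G2 I H1) as [z [Gz [Hz Hz']]].
    exists z. simpl. repeat split; auto. nra.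
Qed.

Lemma pow2_ge N : INR N < 2 ^ N.
Proof.
  induction N. simpl; lra. rewrite S_INR. simpl.
  assert (1 <= 2 ^ N) by (apply pow_R1_Rle; lra). lra.
Qed.

Lemma indep_sym x y : indep x y -> indep y x.
Proof. intros H p q E. destruct (H q p); [lra|]. auto. Qed.

Lemma indep_opp_l x y : indep x y -> indep (- x) y.
Proof. intros H p q E. destruct (H (-p)%Z q); [rewrite opp_IZR; lra|]. lia. Qed.

Lemma start al be : indep al be -> exists x y, inG al be x /\ inG al be y /\ indep x y /\ 0 < y < x.
Proof.
  intros Hi.
  assert (Ha : al <> 0). { intro E. destruct (Hi 1%Z 0%Z); [subst; lra|lia]. }
  assert (Hb : be <> 0). { intro E. destruct (Hi 0%Z 1%Z); [subst; lra|lia]. }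
  assert (GA : inG al be (Rabs al) /\ forall y, indep al y -> indep (Rabs al) y).
  { destruct (Rcase_abs al).
    - rewrite Rabs_left; auto. split. exists (-1)%Z, 0%Z. simpl; ring. apply indep_opp_l.
    - rewrite Rabs_right; auto. split. exists 1%Z, 0%Z. simpl; ring. auto. }
  assert (GB : inG al be (Rabs be) /\ forall y, indep y be -> indep y (Rabs be)).
  { destruct (Rcase_abs be).
    - rewrite Rabs_left; auto. split. exists 0%Z, (-1)%Z. simpl; ring.
      intros; apply indep_sym, indep_opp_l, indep_sym; auto.
    - rewrite Rabs_right; auto. split. exists 0%Z, 1%Z. simpl; ring. auto. }
  destruct GA as [GA IA], GB as [GB IB].
  assert (I : indep (Rabs al) (Rabs be)) by auto.
  assert (0 < Rabs al) by (apply Rabs_pos_lt; auto).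
  assert (0 < Rabs be) by (apply Rabs_pos_lt; auto).
  destruct (Rtotal_order (Rabs al) (Rabs be)) as [h|[h|h]].
  - exists (Rabs be), (Rabs al). split; [|split; [|split]]; auto using indep_sym; try lra.
  - exfalso. destruct (I 1%Z (-1)%Z); [simpl; lra|lia].
  - exists (Rabs al), (Rabs be). split; [|split; [|split]]; auto; try lra.
Qed.

Lemma small al be : indep al be -> forall del, 0 < del -> exists z, inG al be z /\ 0 < z < del.
Proof.
  intros Hi del Hd.
  destruct (start al be Hi) as [x [y [Gx [Gy [I Hy]]]]].
  destruct (archimed_cor1 (del / x)) as [N [HN HN0]].
  { apply Rdiv_lt_0_compat; lra. }
  destruct (iterN al be N x y Gx Gy I Hy) as [z [Gz [Hz Hz']]].
  exists z. repeat split; auto.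
  pose proof (pow2_ge N).
  assert (0 < INR N) by (apply lt_0_INR; lia).
  assert (x / INR N < del).
  { apply Rmult_lt_reg_r with (/ x). apply Rinv_0_lt_compat; lra.
    replace (x / INR N * / x) with (/ INR N) by (field; lra). exact HN. }
  assert (z * INR N < x) by nra.
  apply Rmult_lt_reg_r with (INR N); auto.
  apply Rlt_le_trans with x; auto.
  assert (x = x / INR N * INR N) by (field; lra). nra.
Qed.

Lemma denseG al be : indep al be -> forall u v, u < v -> exists m n : Z, u < IZR m * al + IZR n * be < v.
Proof.
  intros Hi u v Huv.
  destruct (small al be Hi (v - u)) as [z [[m [n Ez]] Hz]]; [lra|].
  destruct (archimed (u / z)) as [A1 A2].
  set (k := up (u / z)) in *.
  exists (k * m)%Z, (k * n)%Z. rewrite !mult_IZR.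
  replace (IZR k * IZR m * al + IZR k * IZR n * be) with (IZR k * z) by (rewrite Ez; ring).
  assert (u = u / z * z) by (field; lra).
  split; nra.
Qed.

Section Main.
Variables (theta eps : R) (a b d : Z).
Hypothesis Htan : tan_irrational theta.
Hypothesis Heps : 0 < eps.
Hypothesis Hd : d <> 0%Z.
Hypothesis Hab : (a, b) <> (0%Z, 0%Z).
Hypothesis Hg : Z.gcd (Z.gcd a b) d = 1%Z.

Let s := sin theta.
Let c := cos theta.
Let Ls := lamstar theta a b.

Lemma Hc : c <> 0.
Proof.
  intro E. apply (Htan 0%Z 1%Z); [lia|]. unfold tan. fold c. rewrite E. unfold Rdiv. rewrite Rinv_0. simpl. ring.
Qed.

Lemma Hdr : IZR d <> 0.
Proof. apply not_0_IZR; auto. Qed.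

Lemma indep_sc : indep s c.
Proof.
  intros p q E.
  destruct (Z.eq_dec p 0) as [Hp|Hp].
  - subst. split; auto. apply eq_IZR. simpl in E.
    assert (IZR q * c = 0) by lra. destruct (Rmult_integral _ _ H); auto. pose proof Hc; contradiction.
  - exfalso. apply (Htan (- q)%Z p Hp). unfold tan. fold s c. rewrite opp_IZR.
    assert (IZR p <> 0) by (apply not_0_IZR; auto). pose proof Hc.
    field_simplify; auto. apply Rmult_eq_reg_r with (IZR p * c); [|intro h; destruct (Rmult_integral _ _ h); auto].
    field_simplify; auto. lra.
Qed.

Lemma Ls_nz : Ls <> 0.
Proof.
  intro E. unfold Ls, lamstar in E. fold s c in E.
  destruct (indep_sc a b E). apply Hab. subst; reflexivity.
Qed.

Lemma Hsc : s * s + c * c = 1.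
Proof. pose proof (sin2_cos2 theta). unfold Rsqr in H. fold s c in H. lra. Qed.

Lemma key (m n : Z) : (IZR m * c - IZR n * s) * (IZR a * c - IZR b * s) =
  IZR m * IZR a + IZR n * IZR b - (IZR m * s + IZR n * c) * Ls.
Proof.
  unfold Ls, lamstar. fold s c.
  replace (IZR m * IZR a + IZR n * IZR b) with ((IZR m * IZR a + IZR n * IZR b) * (s * s + c * c))
    by (rewrite Hsc; ring). ring.
Qed.

Lemma S_sub y : Sset theta eps a b d y -> exists (l : Z) t, 0 <= t < eps /\ y * IZR d = IZR l + t * Ls.
Proof.
  intros [[x k'] [t [[[m [n [Ex Ht]]] [k Ek]] [E1 E2]]]]. simpl in *. fold s c in Ex, Ht.
  exists (k * d - m * a - n * b)%Z, (IZR m * s + IZR n * c). split; [exact Ht|].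
  rewrite <- E2, Ek. unfold lam. fold s c.
  replace t with (- x) by lra. rewrite Ex.
  rewrite !minus_IZR, !mult_IZR.
  pose proof Hdr.
  replace ((IZR k + - (IZR m * c - IZR n * s) * ((IZR a * c - IZR b * s) / IZR d)) * IZR d)
    with (IZR k * IZR d - (IZR m * c - IZR n * s) * (IZR a * c - IZR b * s)) by (field; auto).
  rewrite key. ring.
Qed.

Lemma S_intro (k m n : Z) : 0 <= IZR m * s + IZR n * c < eps ->
  Sset theta eps a b d ((IZR (k * d - m * a - n * b) + (IZR m * s + IZR n * c) * Ls) / IZR d).
Proof.
  intros Ht. exists (IZR m * c - IZR n * s, IZR k), (- (IZR m * c - IZR n * s)).
  split; [split; [exists m, n; split; auto | exists k; auto]|]. simpl. split; [ring|].
  unfold lam. fold s c. pose proof Hdr.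
  rewrite !minus_IZR, !mult_IZR.
  apply Rmult_eq_reg_r with (IZR d); auto.
  replace ((IZR k + - (IZR m * c - IZR n * s) * ((IZR a * c - IZR b * s) / IZR d)) * IZR d)
    with (IZR k * IZR d - (IZR m * c - IZR n * s) * (IZR a * c - IZR b * s)) by (field; auto).
  rewrite key. field; auto.
Qed.


Lemma indep_dsc : indep (IZR d * s) (IZR d * c).
Proof.
  intros p q E. apply indep_sc. pose proof Hdr.
  apply Rmult_eq_reg_l with (IZR d); auto. lra.
Qed.

Lemma approx_int (l : Z) u v : u < v -> exists k m n : Z,
  u < IZR m * s + IZR n * c < v /\ (k*d - m*a - n*b = l)%Z.
Proof.
  intros Huv.
  destruct (Z.gcd_bezout a b _ eq_refl) as [x [y Hxy]].
  destruct (Z.gcd_bezout (Z.gcd a b) d _ Hg) as [u1 [v1 Huv1]].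
  set (m0 := (- l * u1 * x)%Z). set (n0 := (- l * u1 * y)%Z).
  set (x0 := IZR m0 * s + IZR n0 * c).
  destruct (denseG _ _ indep_dsc (u - x0) (v - x0)) as [m' [n' Hmn]]; [lra|].
  exists (m' * a + n' * b + l * v1)%Z, (d * m' + m0)%Z, (d * n' + n0)%Z.
  split.
  - rewrite !plus_IZR, !mult_IZR. unfold x0 in *. split; nra.
  - unfold m0, n0. rewrite <- Hxy in Huv1.
    transitivity (l * ((u1 * (x * a + y * b) + v1 * d)))%Z; [ring| rewrite Huv1; ring].
Qed.

Lemma approx (l : Z) t0 e : 0 <= t0 <= eps -> 0 < e ->
  exists z, Sset theta eps a b d z /\ Rabs (z - (IZR l + t0 * Ls) / IZR d) < e.
Proof.
  intros Ht0 He.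
  set (del := e / (Rabs Ls + 1)).
  assert (Hdel : 0 < del) by (unfold del; apply Rdiv_lt_0_compat; [lra| pose proof (Rabs_pos Ls); lra]).
  assert (exists u v, u < v /\ 0 <= u /\ v <= eps /\ t0 - del <= u /\ v <= t0 + del) as [u [v [H1 [H2 [H3 [H4 H5]]]]]].
  { destruct (Rlt_or_le t0 eps) as [h|h].
    - exists t0, (t0 + Rmin del (eps - t0)).
      pose proof (Rmin_l del (eps - t0)). pose proof (Rmin_r del (eps - t0)).
      assert (0 < Rmin del (eps - t0)) by (apply Rmin_glb_lt; lra). lra.
    - exists (eps - Rmin del eps), eps.
      pose proof (Rmin_l del eps). pose proof (Rmin_r del eps).
      assert (0 < Rmin del eps) by (apply Rmin_glb_lt; lra). lra. }
  destruct (approx_int l u v H1) as [k [m [n [Hm Hk]]]].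
  set (t := IZR m * s + IZR n * c) in *.
  exists ((IZR (k * d - m * a - n * b) + t * Ls) / IZR d).
  split; [apply S_intro; fold t; lra|].
  rewrite Hk. pose proof Hdr.
  replace ((IZR l + t * Ls) / IZR d - (IZR l + t0 * Ls) / IZR d) with ((t - t0) * Ls * / IZR d) by (field; auto).
  rewrite !Rabs_mult, Rabs_inv.
  assert (Habs : Rabs (t - t0) < del) by (apply Rabs_def1; lra).
  assert (1 <= Rabs (IZR d)) by (rewrite <- abs_IZR; apply IZR_le; lia).
  assert (0 < / Rabs (IZR d) <= 1).
  { split. apply Rinv_0_lt_compat; lra. rewrite <- Rinv_1. apply Rinv_le_contravar; lra. }
  pose proof (Rabs_pos (t - t0)). pose proof (Rabs_pos Ls).
  assert (del * (Rabs Ls + 1) = e) by (unfold del; field; lra).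
  assert (Rabs (t - t0) * Rabs Ls <= del * Rabs Ls) by nra.
  nra.
Qed.

End Main.

Lemma div_nonneg x y : 0 <= x -> 0 < y -> 0 <= x / y.
Proof. intros; unfold Rdiv; apply Rmult_le_pos; auto; left; apply Rinv_0_lt_compat; auto. Qed.

Lemma floor_ex (u : R) : exists l : Z, IZR l <= u < IZR l + 1.
Proof.
  destruct (archimed u) as [A1 A2]. exists (up u - 1)%Z. rewrite minus_IZR. simpl. lra.
Qed.

Lemma cover (L e : R) : L <> 0 -> 1 <= e * Rabs L -> 0 < e -> forall u,
  exists (l : Z) t, 0 <= t <= e /\ u = IZR l + t * L.
Proof.
  intros HL H1 He u. destruct (floor_ex u) as [l Hl].
  destruct (Rlt_or_le 0 L) as [hL|hL].
  - rewrite Rabs_right in H1 by lra.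
    exists l, ((u - IZR l) / L). split; [|field; lra]. split.
    + apply div_nonneg; lra.
    + apply Rmult_le_reg_r with L; auto. replace ((u - IZR l) / L * L) with (u - IZR l) by (field; lra). lra.
  - assert (L < 0) by lra. rewrite Rabs_left in H1 by lra.
    exists (l + 1)%Z, ((u - IZR l - 1) / L). rewrite plus_IZR. simpl. split; [|field; lra]. split.
    + replace ((u - IZR l - 1) / L) with ((IZR l + 1 - u) / (- L)) by (field; lra).
      apply div_nonneg; lra.
    + replace ((u - IZR l - 1) / L) with ((IZR l + 1 - u) / (- L)) by (field; lra).
      apply Rmult_le_reg_r with (- L); [lra|].
      replace ((IZR l + 1 - u) / - L * - L) with (IZR l + 1 - u) by (field; lra). lra.
Qed.

Lemma closedT (L e u : R) : L <> 0 -> e * Rabs L < 1 -> 0 < e ->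
  (forall r, 0 < r -> exists (l : Z) t, 0 <= t <= e /\ Rabs (u - (IZR l + t * L)) < r) ->
  exists (l : Z) t, 0 <= t <= e /\ u = IZR l + t * L.
Proof.
  intros HL H1 He Hc. destruct (floor_ex u) as [l Hl].
  set (f := u - IZR l).
  destruct (Rlt_or_le 0 L) as [hL|hL].
  - rewrite Rabs_right in H1 by lra.
    destruct (Rle_or_lt f (e * L)) as [hf|hf].
    + exists l, (f / L). split; [|unfold f; field; lra]. split.
      * apply div_nonneg; unfold f in *; lra.
      * apply Rmult_le_reg_r with L; auto. replace (f / L * L) with f by (field; lra). lra.
    + exfalso.
      set (r := Rmin (f - e * L) (1 - f) / 2).
      assert (Hr : 0 < r /\ r < f - e * L /\ r < 1 - f).
      { pose proof (Rmin_l (f - e * L) (1 - f)). pose proof (Rmin_r (f - e * L) (1 - f)).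
        assert (0 < Rmin (f - e * L) (1 - f)) by (apply Rmin_glb_lt; unfold f in *; lra).
        unfold r; lra. }
      destruct (Hc r ltac:(lra)) as [l' [t' [Ht' Hd]]].
      apply Rabs_def2 in Hd.
      assert (0 <= t' * L <= e * L) by (split; nra).
      destruct (Z_le_gt_dec 0 (l - l')) as [hj|hj].
      * apply IZR_le in hj. rewrite minus_IZR in hj. unfold f in *. lra.
      * assert (hj' : (l - l' <= -1)%Z) by lia. apply IZR_le in hj'. rewrite minus_IZR in hj'.
        unfold f in *. lra.
  - assert (L < 0) by lra. rewrite Rabs_left in H1 by lra.
    destruct (Req_dec f 0) as [h0|h0].
    { exists l, 0. split; [lra|]. unfold f in h0. lra. }
    destruct (Rle_or_lt (1 - e * - L) f) as [hf|hf].
    + exists (l + 1)%Z, ((f - 1) / L). rewrite plus_IZR. simpl. split; [|unfold f; field; lra].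
      replace ((f - 1) / L) with ((1 - f) / (- L)) by (field; lra). split.
      * apply div_nonneg; unfold f in *; lra.
      * apply Rmult_le_reg_r with (- L); [lra|].
        replace ((1 - f) / - L * - L) with (1 - f) by (field; lra). lra.
    + exfalso.
      assert (0 < f) by (unfold f in *; lra).
      set (r := Rmin f (1 - e * - L - f) / 2).
      assert (Hr : 0 < r /\ r < f /\ r < 1 - e * - L - f).
      { pose proof (Rmin_l f (1 - e * - L - f)). pose proof (Rmin_r f (1 - e * - L - f)).
        assert (0 < Rmin f (1 - e * - L - f)) by (apply Rmin_glb_lt; lra).
        unfold r; lra. }
      destruct (Hc r ltac:(lra)) as [l' [t' [Ht' Hd]]].
      apply Rabs_def2 in Hd.
      assert (e * L <= t' * L <= 0) by (split; nra).
      destruct (Z_le_gt_dec 0 (l - l')) as [hj|hj].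
      * apply IZR_le in hj. rewrite minus_IZR in hj. unfold f in *. lra.
      * assert (hj' : (l - l' <= -1)%Z) by lia. apply IZR_le in hj'. rewrite minus_IZR in hj'.
        unfold f in *. lra.
Qed.

Theorem theorem2 (theta eps : R) (a b d : Z) :
  tan_irrational theta -> 0 < eps ->
  d <> 0%Z -> (a, b) <> (0%Z, 0%Z) -> Z.gcd (Z.gcd a b) d = 1%Z ->
  (1 / Rabs (lamstar theta a b) <= eps -> dense_in_R (Sset theta eps a b d)) /\
  (eps < 1 / Rabs (lamstar theta a b) ->
     forall y : R, closure (Sset theta eps a b d) y <->
       exists (t : R) (l : Z), 0 <= t <= eps /\
         y = (IZR l + t * lamstar theta a b) / IZR d).
Proof.
  intros Htan Heps Hd Hab Hg.
  pose proof (Ls_nz theta a b d Htan Hab Hg) as HL.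
  pose proof (Hdr d Hd) as HD.
  set (Ls := lamstar theta a b) in *.
  assert (HA : 0 < Rabs Ls) by (apply Rabs_pos_lt; auto).
  split.
  - intros H1 y e He.
    assert (1 <= eps * Rabs Ls).
    { apply Rmult_le_compat_r with (r := Rabs Ls) in H1; [|lra].
      replace (1 / Rabs Ls * Rabs Ls) with 1 in H1 by (field; lra). lra. }
    destruct (cover Ls eps HL H Heps (y * IZR d)) as [l [t [Ht Eu]]].
    destruct (approx theta eps a b d Htan Heps Hd Hg l t e Ht He) as [z [Sz Hz]].
    exists z. split; auto.
    replace y with ((IZR l + t * Ls) / IZR d); auto.
    apply Rmult_eq_reg_r with (IZR d); auto. unfold Rdiv. rewrite Rmult_assoc, Rinv_l; auto. lra.
  - intros H2 y. split.
    + intros Hcl.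
      assert (eps * Rabs Ls < 1).
      { apply Rmult_lt_compat_r with (r := Rabs Ls) in H2; [|lra].
        replace (1 / Rabs Ls * Rabs Ls) with 1 in H2 by (field; lra). lra. }
      assert (HDa : 0 < Rabs (IZR d)) by (apply Rabs_pos_lt; auto).
      destruct (closedT Ls eps (y * IZR d) HL H Heps) as [l [t [Ht Eu]]].
      { intros r Hr.
        destruct (Hcl (r / Rabs (IZR d))) as [z [Sz Hz]].
        { apply Rdiv_lt_0_compat; auto. }
        destruct (S_sub theta eps a b d Hd z Sz) as [l [t [Ht Ez]]].
        exists l, t. split; [lra|]. fold Ls in Ez. rewrite <- Ez.
        replace (y * IZR d - z * IZR d) with (- ((z - y) * IZR d)) by ring.
        rewrite Rabs_Ropp, Rabs_mult.
        apply Rmult_lt_compat_r with (r := Rabs (IZR d)) in Hz; auto.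
        replace (r / Rabs (IZR d) * Rabs (IZR d)) with r in Hz by (field; lra). exact Hz. }
      exists t, l. split; auto.
      apply Rmult_eq_reg_r with (IZR d); auto. unfold Rdiv. rewrite Rmult_assoc, Rinv_l; auto. lra.
    + intros [t [l [Ht Ey]]] e He.
      destruct (approx theta eps a b d Htan Heps Hd Hg l t e Ht He) as [z [Sz Hz]].
      exists z. split; auto. rewrite Ey. exact Hz.
Qed.
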